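(* Let $(X,*,0)$ be a solid weak BCC-algebra and $a\in I(X)$. If $x,y\in B(a)$, then $x*(x*y)\in B(a)$ and $y*(y*x)\in B(a)$.
   Context: A weak BCC-algebra is a set $X$ with a binary operation $*$ and a constant $0$ satisfying, for all $x,y,z\in X$: (i) $((x*y)*(z*y))*(x*z)=0$; (ii) $x*x=0$; (iii) $x*0=x$; (iv) $x*y=y*x=0$ implies $x=y$. The relation $x\leqslant y$ iff $x*y=0$ is a partial order on $X$. Let $I(X)$ be the set of minimal elements of $X$ with respect to $\leqslant$. For $a\in I(X)$ the branch initiated by $a$ is $B(a)=\{x\in X: a\leqslant x\}$; ''belonging to the same branch'' means lying in a common $B(a)$. A weak BCC-algebra is called (left) solid if $(x*y)*z=(x*z)*y$ holds for all $x,y$ belonging to the same branch and all $z\in X$. *)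

(* Defs.v *)
Definition weak_BCC {X : Type} (m : X -> X -> X) (z : X) : Prop :=
  (forall x y w : X, m (m (m x y) (m w y)) (m x w) = z) /\
  (forall x : X, m x x = z) /\
  (forall x : X, m x z = x) /\
  (forall x y : X, m x y = z -> m y x = z -> x = y).

Definition bcc_le {X : Type} (m : X -> X -> X) (z : X) (x y : X) : Prop :=
  m x y = z.

Definition minimal_elt {X : Type} (m : X -> X -> X) (z : X) (a : X) : Prop :=
  forall x : X, bcc_le m z x a -> x = a.

Definition branch {X : Type} (m : X -> X -> X) (z : X) (a x : X) : Prop :=
  bcc_le m z a x.

Definition same_branch {X : Type} (m : X -> X -> X) (z : X) (x y : X) : Prop :=
  exists a : X, minimal_elt m z a /\ branch m z a x /\ branch m z a y.

Definition solid {X : Type} (m : X -> X -> X) (z : X) : Prop :=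
  forall x y w : X, same_branch m z x y -> m (m x y) w = m (m x w) y.

(* Main.v *)
Require Import Defs.

Lemma key (X : Type) (m : X -> X -> X) (z : X)
  (HX : weak_BCC m z) (a : X) (Ha : minimal_elt m z a) (x y : X)
  (Hx : branch m z a x) (Hy : branch m z a y) :
  branch m z a (m x (m x y)).
Proof.
  destruct HX as [H1 [H2 [H3 H4]]].
  unfold branch, bcc_le, minimal_elt in *.
  assert (Hxy : m z (m x y) = z).
  { pose proof (H1 a y x) as E. rewrite Hx, H3, Hy in E. exact E. }
  assert (Ea : m a (m x y) = a).
  { pose proof (H1 a (m x y) z) as E. rewrite Hxy, H3, H3 in E.
    apply Ha. exact E. }
  pose proof (H1 a (m x y) x) as E. rewrite Hx, H3, Ea in E. exact E.
Qed.

Theorem corollary3p3 (X : Type) (m : X -> X -> X) (z : X)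
  (HX : weak_BCC m z) (Hsolid : solid m z)
  (a : X) (Ha : minimal_elt m z a) (x y : X)
  (Hx : branch m z a x) (Hy : branch m z a y) :
  branch m z a (m x (m x y)) /\ branch m z a (m y (m y x)).
Proof.
  split; apply key; assumption.
Qed.
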